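(* Let $w$ be a perfectly clustering word over a totally ordered alphabet having a palindromic special factorization $w=a_1\pi_1a_2\pi_2\cdots\pi_{k-1}a_k$. Then for every $s\in\{1,\dots,k-1\}$, the word $\pi_s$ is empty if and only if $|w|_{a_1}+\cdots+|w|_{a_s}=|w|_{a_{s+1}}+\cdots+|w|_{a_k}$.
   Context: $|w|_a$ is the number of occurrences of the letter $a$ in $w$. A special factorization of $w$ is a factorization $w=a_1\pi_1a_2\cdots\pi_{k-1}a_k$ where the set of letters occurring in $w$ is $\{a_1<\cdots<a_k\}$ and $\pi_1,\dots,\pi_{k-1}$ are words; it is palindromic if every $\pi_i$ is a palindrome. Lexicographic order: a proper prefix is smaller. For a primitive word $v$ of length $n$ with conjugates $v_1<\cdots<v_n$, $\mathrm{bw}(v)$ is the word formed by the last letters of $v_1,\dots,v_n$; $v$ is perfectly clustering if it is primitive and $\mathrm{bw}(v)$ is weakly decreasing. *)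

(* Defs.v *)
From HB Require Import structures.
From mathcomp Require Import all_boot all_order.
Set Implicit Arguments.
Unset Strict Implicit.
Unset Printing Implicit Defensive.
Import Order.TTheory.
Local Open Scope order_scope.

Section Words.
Variables (d : Order.disp_t) (T : orderType d).

Definition occ (w : seq T) (x : T) : nat := count_mem x w.

Fixpoint lexle (u v : seq T) : bool :=
  match u, v with
  | [::], _ => true
  | _ :: _, [::] => false
  | x :: u', y :: v' => (x < y) || ((x == y) && lexle u' v')
  end.

Definition wpow (u : seq T) (k : nat) : seq T := flatten (nseq k u).

(* primitive: not a power u^k of a word u with k >= 2 (so in particular nonempty) *)
Definition primitive (v : seq T) : Prop :=
  ~ (exists (u : seq T) (k : nat), 1 < k /\ v = wpow u k).

Definition conjugates (v : seq T) : seq (seq T) :=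
  [seq rot i v | i <- iota 0 (size v)].

(* bw(v): last letters of the lexicographically sorted conjugates.
   (For nonempty v = x :: _, every conjugate is nonempty, so last x u is
   the last letter of u.) *)
Definition bw (v : seq T) : seq T :=
  match v with
  | [::] => [::]
  | x :: _ => [seq last x u | u <- sort lexle (conjugates v)]
  end.

Definition perfectly_clustering (v : seq T) : Prop :=
  primitive v /\ sorted (fun x y : T => y <= x) (bw v).

(* a = [:: a_1; ...; a_k], pis = [:: pi_1; ...; pi_{k-1}] is a special
   factorization w = a_1 pi_1 a_2 ... pi_{k-1} a_k, where
   {a_1 < ... < a_k} is the set of letters occurring in w. *)
Definition special_factorization (w : seq T) (a : seq T) (pis : seq (seq T)) : Prop :=
  [/\ sorted (fun x y : T => x < y) a,
      (forall x : T, (x \in w) = (x \in a)),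
      size pis = (size a).-1 &
      match a with
      | [::] => False
      | a1 :: a' => w = a1 :: flatten [seq p.1 ++ [:: p.2] | p <- zip pis a']
      end].

Definition palindromic_factors (pis : seq (seq T)) : Prop :=
  forall p, p \in pis -> p = rev p.

End Words.

(* Main.v *)
Require Import Defs.
From mathcomp Require Import all_boot all_order.
From mathcomp Require Import zify.
Set Implicit Arguments.
Unset Strict Implicit.
Unset Printing Implicit Defensive.
Import Order.TTheory.

Section Lex.
Variables (d : Order.disp_t) (T : orderType d).
Implicit Types u v x : seq T.

Lemma lexle_refl u : lexle u u.
Proof. by elim: u => //= x u ->; rewrite eqxx orbT. Qed.

Lemma lexle_total u v : lexle u v || lexle v u.
Proof.
elim: u v => [|x u IH] [|y v] //=.
by case: (ltgtP x y) => //= <-; rewrite eqxx ltxx /= IH.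
Qed.

Lemma lexle_anti u v : lexle u v -> lexle v u -> u = v.
Proof.
elim: u v => [|x u IH] [|y v] //=.
case: (ltgtP x y) => //= -> H1 H2; by rewrite (IH _ H1 H2).
Qed.

Lemma lexle_trans : transitive (@lexle _ T).
Proof.
move=> v u t; elim: u v t => [|x u IH] [|y v] [|z t] //=.
case: (ltgtP x y) => //= Hxy; case: (ltgtP y z) => //= Hyz.
- by rewrite (lt_trans Hxy Hyz).
- by move=> _ _; rewrite -Hyz Hxy.
- by move=> _ _; rewrite Hxy Hyz.
- by move=> H1 H2; rewrite Hxy Hyz eqxx ltxx /= (IH _ _ H1 H2).
Qed.

Lemma lexle_cat u v s t : size u = size v ->
  lexle (u ++ s) (v ++ t) = if u == v then lexle s t else lexle u v.
Proof.
elim: u v => [|x u IH] [|y v] //= [] Hs.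
by rewrite eqseq_cons IH //; case: (ltgtP x y) => //= _; case: (u == v).
Qed.

End Lex.
Section Prim.
Variables (d : Order.disp_t) (T : orderType d).
Implicit Types u v z : seq T.

Lemma comm_pow m u z : size z = m * size u -> z ++ u = u ++ z -> z = wpow u m.
Proof.
elim: m z => [|m IH] z /=.
  by move/size0nil => ->.
move=> Hs Hc.
have Hle : size u <= size z by rewrite Hs mulSn leq_addr.
have Ht : take (size u) z = u.
  have := congr1 (take (size u)) Hc.
  by rewrite takel_cat // take_size_cat.
have Hz : z = u ++ drop (size u) z by rewrite -{1}Ht cat_take_drop.
set z' := drop (size u) z in Hz *.
have Hc' : z' ++ u = u ++ z'.
  move: Hc; rewrite Hz -catA => /(congr1 (drop (size u))).
  by rewrite !drop_size_cat.
have Hs' : size z' = m * size u.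
  by move: Hs; rewrite Hz size_cat mulSn => /eqP; rewrite eqn_add2l => /eqP.
by rewrite Hz (IH _ Hs' Hc').
Qed.

Lemma rot_gcd v : forall a b, a <= size v -> b <= size v ->
  rot a v = v -> rot b v = v -> rot (gcdn a b) v = v.
Proof.
move=> a b; move Hs : (a + b) => s.
elim: s {-2}s (leqnn s) a b Hs => [|s IH] s0 Hs0 a b Hab Ha Hb Ra Rb.
  have -> : a = 0 by lia.
  by rewrite gcd0n.
case: a Hab Ha Ra => [|a] Hab Ha Ra; first by rewrite gcd0n.
case: b Hab Hb Rb => [|b] Hab Hb Rb; first by rewrite gcdn0.
case: (leqP a b) => Hab'.
- have E : b.+1 = (b - a) + a.+1 by lia.
  have Rb' : rot (b - a) v = v.
    by move: Rb; rewrite E rotD ?Ra //; lia.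
  have -> : gcdn a.+1 b.+1 = gcdn a.+1 (b - a).
    by rewrite E addnC gcdnDl.
  apply: (IH (a.+1 + (b - a))) => //; lia.
- have E : a.+1 = (a - b) + b.+1 by lia.
  have Ra' : rot (a - b) v = v.
    by move: Ra; rewrite E rotD ?Rb //; lia.
  have -> : gcdn a.+1 b.+1 = gcdn (a - b) b.+1.
    by rewrite E gcdnC addnC gcdnDl gcdnC.
  apply: (IH ((a - b) + b.+1)) => //; lia.
Qed.

Lemma prim_rot v dd : primitive v -> 0 < dd < size v -> rot dd v != v.
Proof.
move=> Hp /andP [H0 H1]; apply/negP => /eqP Hr.
set g := gcdn dd (size v).
have Rg : rot g v = v by apply: rot_gcd => //; [lia | exact: rot_size].
have g0 : 0 < g by rewrite gcdn_gt0 H0.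
have gd : g %| size v by exact: dvdn_gcdr.
have gle : g <= dd by apply: dvdn_leq => //; exact: dvdn_gcdl.
have Hq : size v = (size v %/ g) * g by rewrite divnK.
set q := size v %/ g in Hq *.
have q2 : 1 < q.
  case: q Hq => [|[|q]] Hq //; lia.
apply: Hp; exists (take g v), q; split => //.
have Hgs : g <= size v by lia.
have gl : g < size v by lia.
have Ev : v = take g v ++ drop g v by rewrite cat_take_drop.
have Hsz : size (drop g v) = q.-1 * size (take g v).
  rewrite size_drop size_take gl.
  have [q' Eq'] : exists q', q = q'.+1 by exists q.-1; lia.
  rewrite Eq' /=; rewrite Eq' mulSn in Hq; lia.
have Hc : drop g v ++ take g v = take g v ++ drop g v.
  by rewrite -rot_size_cat -Ev size_take gl Rg.
rewrite {1}Ev (comm_pow Hsz Hc).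
by case: q q2 {Hq Hsz} => [|q].
Qed.
End Prim.

Section Rank.
Variables (d : Order.disp_t) (T : orderType d).
Variable w : seq T.
Hypothesis Hprim : primitive w.

Local Notation n := (size w).
Local Notation C := (conjugates w).

Definition ltw (u v : seq T) := lexle u v && (u != v).
Definition rk (m : nat) := count (fun v => ltw v (rot m w)) C.

Lemma n_gt0 : 0 < n.
Proof.
case: w Hprim => [|x w'] // Hp; exfalso; apply: Hp.
by exists [::], 2.
Qed.

Lemma rot_inj_lt i j : i < n -> j < n -> rot i w = rot j w -> i = j.
Proof.
wlog Hij : i j / i <= j.
  move=> H Hi Hj E; case: (leqP i j) => h; first exact: H.
  by symmetry; apply: H => //; exact: ltnW.
move=> Hi Hj E; case: (ltngtP i j) => // Hlt.
have Hd : j = (j - i) + i by lia.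
have : rot (j - i) w = w.
  apply: (@rot_inj i); rewrite rot_rot -rotD; last by lia.
  by rewrite -Hd E.
move=> Hr; have H := @prim_rot _ _ w (j - i) Hprim.
rewrite Hr eqxx in H; suff : false by []; apply: H; lia.
lia.
Qed.

Lemma C_uniq : uniq C.
Proof.
rewrite /conjugates map_inj_in_uniq ?iota_uniq // => i j.
rewrite !mem_iota !add0n => /andP [_ Hi] /andP [_ Hj]; exact: rot_inj_lt.
Qed.

Lemma rot_in_C m : m < n -> rot m w \in C.
Proof. by move=> Hm; apply/mapP; exists m => //; rewrite mem_iota. Qed.

Lemma C_size : size C = n.
Proof. by rewrite /conjugates size_map size_iota. Qed.

Lemma inC v : v \in C -> exists2 m, m < n & v = rot m w.
Proof. by case/mapP => m; rewrite mem_iota add0n => /andP [_ Hm] ->; exists m. Qed.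

Lemma C_rot1 : perm_eq C (map (rot 1) C).
Proof.
have n0 := n_gt0.
have -> : map (rot 1) C = [seq rot i w | i <- iota 1 n].
  rewrite /conjugates -map_comp (iotaDl 1 0) -map_comp.
  apply/eq_in_map => i; rewrite mem_iota add0n => /andP [_ Hi] /=.
  by symmetry; exact: (rotS Hi).
rewrite /conjugates.
case: n n0 (rot_size w) => [|n'] // _ Rn.
rewrite [iota 1 _](_ : _ = iota 1 n' ++ [:: n'.+1]); last by have := iotaD 1 n' 1; rewrite addn1 => ->.
by rewrite /= map_cat /= Rn rot0 cats1 perm_sym perm_rcons.
Qed.

Lemma C_elem_size v : v \in C -> size v = n.
Proof. by case/inC => m _ ->; rewrite size_rot. Qed.

Lemma last_indep (x y : T) v : v != [::] -> last x v = last y v.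
Proof. by case: v. Qed.

Lemma C_nil v : v \in C -> v != [::].
Proof. move/C_elem_size => H; apply/eqP => E; move: H n_gt0; rewrite E /=; lia. Qed.

Lemma PC (Hpc : perfectly_clustering w) x0 u v : u \in C -> v \in C ->
  (last x0 u < last x0 v)%O -> ltw v u.
Proof.
case: Hpc => _ Hs Hu Hv Hl.
have Huv : u != v by apply/eqP => E; move: Hl; rewrite E ltxx.
rewrite /ltw eq_sym Huv andbT.
case Hvu : (lexle v u) => //.
have Huv' : lexle u v by move: (lexle_total u v); rewrite Hvu orbF.
case Ew : w Hs Hl Hu Hv => [|x w'] Hs Hl Hu Hv; first by move: n_gt0; rewrite Ew.
rewrite -Ew in Hu Hv.
rewrite /bw -Ew in Hs.
set S := sort (@lexle _ T) C in Hs.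
have HuS : u \in S by rewrite mem_sort.
have HvS : v \in S by rewrite mem_sort.
have Ssort : sorted (@lexle _ T) S by apply: sort_sorted; exact: lexle_total.
have Suniq : uniq S by rewrite sort_uniq C_uniq.
rewrite (last_indep x0 x (C_nil Hu)) (last_indep x0 x (C_nil Hv)) in Hl.
have Hi : index u S < size S by rewrite index_mem.
have Hj : index v S < size S by rewrite index_mem.
case: (ltngtP (index u S) (index v S)) => Hij.
- have Htr : transitive (fun a b : T => (b <= a)%O).
    by move=> a b c H1 H2; exact: le_trans H2 H1.
  have := sorted_ltn_nth Htr x Hs.
  move=> /(_ (index u S) (index v S)); rewrite !inE size_map => /(_ Hi Hj Hij).
  rewrite !(nth_map [::]) // !nth_index // => H.
  by move: (lt_le_trans Hl H); rewrite ltxx.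
- have := sorted_ltn_nth (@lexle_trans _ T) [::] Ssort.
  move=> /(_ (index v S) (index u S)); rewrite !inE => /(_ Hj Hi Hij).
  by rewrite !nth_index // Hvu.
- by move: Huv; rewrite -(nth_index [::] HuS) Hij nth_index // eqxx.
Qed.

Lemma head_rot x0 m : m < n -> head x0 (rot m w) = nth x0 w m.
Proof. by move=> Hm; rewrite /rot (drop_nth x0 Hm). Qed.

Lemma count_head (P : pred T) x0 : count (fun v => P (head x0 v)) C = count P w.
Proof.
rewrite /conjugates count_map.
rewrite -[in RHS](mkseq_nth x0 w) /mkseq count_map.
by apply: eq_in_count => m; rewrite mem_iota add0n => /andP [_ Hm] /=; rewrite head_rot.
Qed.

Lemma count_disj (A B : pred (seq T)) s : (forall v, v \in s -> ~~ (A v && B v)) ->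
  count (fun v => A v || B v) s = count A s + count B s.
Proof.
elim: s => //= v s IH H; rewrite IH; last by move=> z Hz; apply: H; rewrite inE Hz orbT.
have := H v; rewrite inE eqxx => /(_ isT).
by case: (A v); case: (B v) => //= _; lia.
Qed.

Definition rkw u := count (fun v => ltw v u) C.

Lemma ltw_irr u : ltw u u = false.
Proof. by rewrite /ltw eqxx andbF. Qed.

Lemma ltw_asym u v : ltw u v -> ltw v u = false.
Proof.
rewrite /ltw => /andP [H1 H2]; apply/negP => /andP [H3 _].
by move: H2; rewrite (lexle_anti H1 H3) eqxx.
Qed.

Lemma ltw_trans u v z : ltw u v -> ltw v z -> ltw u z.
Proof.
rewrite /ltw => /andP [H1 H2] /andP [H3 H4]; rewrite (lexle_trans H1 H3) /=.
apply/eqP => E; subst z; move: H2; rewrite (lexle_anti H1 H3) eqxx //.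
Qed.

Lemma ltw_total u v : u != v -> ltw u v || ltw v u.
Proof.
rewrite /ltw => H; rewrite H eq_sym H !andbT; exact: lexle_total.
Qed.

Lemma rkw_lt u v : u \in C -> ltw u v -> rkw u < rkw v.
Proof.
move=> Hu Huv; rewrite /rkw.
have H1 : count (fun z => ltw z u || (z == u)) C <= count (fun z => ltw z v) C.
  apply: sub_count => z /orP [H|/eqP ->]; [exact: ltw_trans H Huv | exact Huv].
rewrite count_disj in H1; last by move=> z _; apply/negP => /andP [H /eqP E]; move: H; rewrite E ltw_irr.
have E1 : count (fun z => z == u) C = 1.
  by have := count_uniq_mem u C_uniq; rewrite Hu.
by rewrite E1 addn1 in H1.
Qed.

Lemma rkw_bound u : u \in C -> rkw u < n.
Proof.
move=> Hu; rewrite /rkw -C_size -(count_predC (fun z => ltw z u)) -addn1 leq_add2l.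
rewrite -has_count; apply/hasP; exists u => //=; by rewrite ltw_irr.
Qed.

Lemma rk_lt m : m < n -> rk m < n.
Proof. by move=> Hm; apply: rkw_bound; exact: rot_in_C. Qed.

Lemma rk_inj m1 m2 : m1 < n -> m2 < n -> rk m1 = rk m2 -> m1 = m2.
Proof.
move=> H1 H2 E; apply: rot_inj_lt => //.
apply/eqP; apply/negP => Hne.
have := ltw_total (introN idP Hne); case/orP => H.
- by move: (rkw_lt (rot_in_C H1) H); rewrite /rk in E; rewrite /rkw E ltnn.
- by move: (rkw_lt (rot_in_C H2) H); rewrite /rk in E; rewrite /rkw E ltnn.
Qed.


Lemma ltw_head x y u v : (x < y)%O -> ltw (x :: u) (y :: v).
Proof.
move=> H; rewrite /ltw /= H /=; apply/eqP => -[E _]; by move: H; rewrite E ltxx.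
Qed.

Lemma rk_low x0 m : m < n -> count (fun y => (y < nth x0 w m)%O) w <= rk m.
Proof.
move=> Hm; rewrite -(count_head _ x0) /rk.
apply: sub_count => v /=.
have := rot_in_C Hm; have := head_rot x0 Hm.
case: (rot m w) => [|x tu] /= -> Hu; first by move: (C_nil Hu).
case: v => [|y tv] /=; first by move=> _; rewrite /ltw /=.
exact: ltw_head.
Qed.

Lemma rk_step (Hpc : perfectly_clustering w) x0 m : m.+1 < n ->
  rk m.+1 + count (fun y => (y < nth x0 w m)%O) w + count (fun y => (y <= nth x0 w m)%O) w
  = rk m + n.
Proof.
move=> Hm1; have Hm : m < n by lia.
set x := nth x0 w m.
have Hu := rot_in_C Hm.
have Hhu := head_rot x0 Hm.
have Hsu := C_elem_size Hu.
case Eu : (rot m w) Hu Hhu Hsu => [|x' tu] Hu Hhu Hsu; first by move: (C_nil Hu).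
simpl in Hhu; subst x'.
have E1 : rk m.+1 = count (fun v => (x < head x0 v)%O || ((head x0 v == x) && ltw v (x :: tu))) C.
  rewrite /rk (rotS Hm) Eu (permP C_rot1) count_map.
  apply: eq_in_count => v Hv /=.
  have Hv1 : rot 1 v \in C by rewrite (perm_mem C_rot1); apply: map_f.
  have Hu1 : rot 1 (x :: tu) \in C by rewrite (perm_mem C_rot1); apply: map_f.
  have Hsv := C_elem_size Hv.
  case: v Hv Hv1 Hsv => [|y tv] Hv Hv1 Hsv; first by move: (C_nil Hv).
  rewrite !rot1_cons in Hv1 Hu1 *; rewrite /=.
  case: (ltgtP x y) => Hxy /=.
  - by apply: (PC Hpc (x0 := x0)) => //; rewrite !last_rcons.
  - apply: ltw_asym; apply: (PC Hpc (x0 := x0)) => //; rewrite !last_rcons //.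
  - subst y. rewrite /ltw -!cats1 lexle_cat; last by move: Hsv Hsu => /= H1 H2; lia.
    rewrite /= ltxx eqxx /=.
    have -> : (tv ++ [:: x] != tu ++ [:: x]) = (tv != tu) by rewrite !cats1 eqseq_rcons eqxx andbT.
    by rewrite eqseq_cons eqxx /=; case: (tv =P tu) => [->|]; rewrite ?eqxx ?andbF.
have E2 : rk m = count (fun v => (head x0 v < x)%O || ((head x0 v == x) && ltw v (x :: tu))) C.
  rewrite /rk Eu; apply: eq_in_count => v Hv /=.
  case: v Hv => [|y tv] Hv; first by move: (C_nil Hv).
  rewrite /=; case: (ltgtP y x) => Hxy /=.
  - exact: ltw_head.
  - by apply: ltw_asym; apply: ltw_head.
  - by [].
rewrite E1 E2 !count_disj; first last.
  by move=> v _; apply/negP => /andP [H1 /andP [/eqP H2 _]]; move: H1; rewrite H2 ltxx.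
  by move=> v _; apply/negP => /andP [H1 /andP [/eqP H2 _]]; move: H1; rewrite H2 ltxx.
rewrite !count_head.
have : count (Order.lt x) w + count (fun y => (y <= x)%O) w = n.
  rewrite -(count_predC (fun y => (y <= x)%O)) addnC; congr (_ + _).
  by apply: eq_count => y /=; rewrite ltNge.
rewrite (count_head (fun y => (y < x)%O)) => H; rewrite -H.
have Ea : forall a b c dd : nat, a + b + c + dd = c + b + (a + dd) by move=> *; lia.
exact: Ea.
Qed.

Lemma sum_iota k : 2 * \sum_(0 <= i < k) i = k * k.-1.
Proof.
elim: k => [|k IH]; first by rewrite big_geq.
rewrite big_nat_recr //= mulnDr IH; case: k {IH} => //= k; lia.
Qed.

Lemma rk_sum : 2 * \sum_(0 <= m < n) rk m = n * n.-1.
Proof.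
have Hu : uniq (map rk (iota 0 n)).
  rewrite map_inj_in_uniq ?iota_uniq // => i j.
  rewrite !mem_iota !add0n => /andP [_ Hi] /andP [_ Hj]; exact: rk_inj.
have Hsub : {subset map rk (iota 0 n) <= iota 0 n}.
  move=> z /mapP [m]; rewrite !mem_iota !add0n => /andP [_ Hm] ->; exact: rk_lt.
have Hsz : size (iota 0 n) <= size (map rk (iota 0 n)) by rewrite size_map.
have [_ Heq] := uniq_min_size Hu Hsub Hsz.
have Hp := uniq_perm Hu (iota_uniq 0 n) Heq.
rewrite -(sum_iota n); congr (2 * _).
rewrite /index_iota subn0 -(big_map rk predT (fun i => i)).
exact: perm_big.
Qed.

End Rank.





Section Pos.
Variables (d : Order.disp_t) (T : orderType d).
Variables (w : seq T) (a1 : T) (a' : seq T) (pis : seq (seq T)).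
Hypothesis Hsz : size pis = size a'.
Hypothesis Hw : w = a1 :: flatten [seq p.1 ++ [:: p.2] | p <- zip pis a'].

Local Notation f := (fun p : seq T * T => p.1 ++ [:: p.2]).
Definition Pos j := j + sumn (map size (take j pis)).

Lemma drop_Pos j : j <= size a' ->
  drop (Pos j) w = nth a1 (a1 :: a') j :: flatten (map f (drop j (zip pis a'))).
Proof.
elim: j => [|j IH] Hj.
  by rewrite /Pos take0 /= drop0 Hw.
have Hj' : j < size (zip pis a') by rewrite size_zip Hsz minnn.
have := IH (ltnW Hj); rewrite (drop_nth ([::], a1) Hj') nth_zip //= => E.
have -> : Pos j.+1 = (size (nth [::] pis j)).+1 + Pos j.
  rewrite /Pos (take_nth [::]) ?Hsz // -cats1 map_cat sumn_cat /=; lia.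
by rewrite -drop_drop E /= -catA drop_size_cat.
Qed.

Lemma Pos_step j : j < size a' -> Pos j.+1 = Pos j + size (nth [::] pis j) + 1.
Proof.
move=> Hj; rewrite /Pos (take_nth [::]) ?Hsz // -cats1 map_cat sumn_cat /=; lia.
Qed.

Lemma nth_Pos x0 j : j <= size a' -> nth x0 w (Pos j) = nth a1 (a1 :: a') j.
Proof.
move=> Hj; have := congr1 (nth x0 ^~ 0) (drop_Pos Hj).
by rewrite nth_drop addn0 /=.
Qed.

Lemma Pos_lt j : j <= size a' -> Pos j < size w.
Proof.
move=> Hj; have := congr1 size (drop_Pos Hj); rewrite size_drop /=; lia.
Qed.

Lemma Pos_last : Pos (size a') = (size w).-1.
Proof.
have := congr1 size (drop_Pos (leqnn _)).
rewrite size_drop drop_oversize /=; last by rewrite size_zip Hsz minnn.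
lia.
Qed.

Lemma nth_inner x0 j t : j < size a' -> t < size (nth [::] pis j) ->
  nth x0 w (Pos j + 1 + t) = nth x0 (nth [::] pis j) t.
Proof.
move=> Hj Ht; have := congr1 (nth x0 ^~ (t.+1)) (drop_Pos (ltnW Hj)).
have Hj' : j < size (zip pis a') by rewrite size_zip Hsz minnn.
rewrite (drop_nth ([::], a1) Hj') nth_zip //= nth_drop => E; rewrite -addnA add1n E.
by rewrite -catA nth_cat Ht.
Qed.

End Pos.

Section Seg.
Variables (d : Order.disp_t) (T : orderType d).
Variable w : seq T.
Hypothesis Hpc : perfectly_clustering w.
Let Hprim : primitive w := Hpc.1.
Local Notation n := (size w).
Local Notation r := (rk w).

Lemma seg_pairs x0 p q : p < q -> q < n ->
  (forall t, 0 < t -> p + t < q -> nth x0 w (p + t) = nth x0 w (q - t)) ->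
  forall t, 0 < t -> t <= q - p -> r (p + t) + r (q.+1 - t) = r p.+1 + r q.
Proof.
move=> Hpq Hq Hpal; elim => [|t IH] // _ Ht.
case: t IH Ht => [|t] IH Ht; first by rewrite addn1 subSS subn0.
have := IH isT (ltnW Ht).
have S1 := rk_step Hprim Hpc x0 (m := p + t.+1) ltac:(lia).
have S2 := rk_step Hprim Hpc x0 (m := q - t.+1) ltac:(lia).
have E := Hpal t.+1 isT ltac:(lia).
rewrite E in S1.
have -> : p + t.+2 = (p + t.+1).+1 by lia.
have E2 : q.+1 - t.+1 = (q - t.+1).+1 by lia.
rewrite E2; have -> : q.+1 - t.+2 = q - t.+1 by lia.
lia.
Qed.

Lemma seg_sum x0 p q : p < q -> q < n ->
  (forall t, 0 < t -> p + t < q -> nth x0 w (p + t) = nth x0 w (q - t)) ->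
  2 * \sum_(p.+1 <= m < q.+1) r m = (q - p) * (r p.+1 + r q).
Proof.
move=> Hpq Hq Hpal.
rewrite mul2n -addnn {2}big_nat_rev -big_split /=.
rewrite (eq_big_nat _ _ (F2 := fun _ => r p.+1 + r q)); first by rewrite sum_nat_const_nat subSS.
move=> m /andP [H1 H2].
have := seg_pairs Hpq Hq Hpal (t := m - p) ltac:(lia) ltac:(lia).
have -> : p + (m - p) = m by lia.
by have -> : q.+1 - (m - p) = p.+1 + q.+1 - m.+1 by lia.
Qed.

Lemma seg_low x0 p q : p < q -> q < n -> (nth x0 w p < nth x0 w q)%O ->
  r p.+1 + count (fun y => (y <= nth x0 w p)%O) w >= n /\
  r q >= count (fun y => (y <= nth x0 w p)%O) w.
Proof.
move=> Hpq Hq Hlt.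
have S1 := rk_step Hprim Hpc x0 (m := p) ltac:(lia).
have L1 := rk_low Hprim x0 (m := p) ltac:(lia).
have L2 := rk_low Hprim x0 (m := q) Hq.
have L3 : count (fun y => (y <= nth x0 w p)%O) w <= count (fun y => (y < nth x0 w q)%O) w.
  by apply: sub_count => y /= H; exact: le_lt_trans H Hlt.
split; lia.
Qed.

End Seg.

Lemma sum_count_uniq (d : Order.disp_t) (T : orderType d) (w l : seq T) : uniq l ->
  \sum_(x <- l) occ w x = count (fun y => y \in l) w.
Proof.
elim: l => [|x l IH] /=; first by rewrite big_nil; elim: w => //.
case/andP => Hx Hu; rewrite big_cons IH //.
have -> : count (fun y => y \in x :: l) w = count (fun y => (y == x) || (y \in l)) w.
  by apply: eq_count => y; rewrite inE.
rewrite /occ; clear IH; elim: w => //= y w' <-.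
case: (y =P x) => [->|] /=; first by rewrite (negPf Hx); lia.
move=> _; lia.
Qed.

Theorem corollary6p3 (d : Order.disp_t) (T : orderType d)
    (w a : seq T) (pis : seq (seq T)) :
  perfectly_clustering w ->
  special_factorization w a pis ->
  palindromic_factors pis ->
  forall s : nat, 1 <= s <= (size a).-1 ->
    (nth [::] pis s.-1 = [::] <->
     \sum_(x <- take s a) occ w x = \sum_(x <- drop s a) occ w x).
Proof.
move=> Hpc [Hsort Hmem Hsz Hw] Hpal s /andP [Hs1 Hs2].
have Hprim : primitive w := Hpc.1.
case: a Hsort Hmem Hsz Hw Hs2 => [|a1 a'] // Hsort Hmem Hsz Hw Hs2.
rewrite /= in Hsz Hs2.
set n := size w.
have n0 : 0 < n := n_gt0 Hprim.
have SEG : forall i, i < size a' ->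
  [/\ Pos pis i < Pos pis i.+1, Pos pis i.+1 < n,
      (nth a1 w (Pos pis i) < nth a1 w (Pos pis i.+1))%O &
      forall t, 0 < t -> Pos pis i + t < Pos pis i.+1 ->
        nth a1 w (Pos pis i + t) = nth a1 w (Pos pis i.+1 - t)].
  move=> i Hi.
  set p := Pos pis i; set q := Pos pis i.+1; set pi := nth [::] pis i.
  have Hq : q = p + size pi + 1 by rewrite /q (Pos_step Hsz Hi).
  have Hqn : q < n by apply: (Pos_lt Hsz Hw).
  have Hwp : nth a1 w p = nth a1 (a1 :: a') i by rewrite (nth_Pos Hsz Hw a1) // ltnW.
  have Hwq : nth a1 w q = nth a1 (a1 :: a') i.+1 by rewrite (nth_Pos Hsz Hw a1).
  split => //; first by lia.
    rewrite Hwp Hwq; have H := @lt_sorted_ltn_nth _ _ a1 _ Hsort i i.+1.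
    rewrite H ?inE /=; lia.
  move=> t Ht0 Htq.
  have Pi : pi = rev pi by apply: Hpal; rewrite /pi mem_nth // Hsz.
  have -> : p + t = p + 1 + (t.-1) by lia.
  have -> : q - t = p + 1 + (size pi - t) by lia.
  rewrite !(nth_inner Hsz Hw a1) // -/pi; try lia.
  rewrite {1}Pi nth_rev; last by lia.
  by congr nth; lia.
have LOW : forall i, i < size a' -> n <= rk w (Pos pis i).+1 + rk w (Pos pis i.+1).
  move=> i Hi; have [H1 H2 H3 _] := SEG i Hi.
  have [L1 L2] := seg_low Hpc H1 H2 H3; lia.
set j := s.-1.
have Hj : j < size a' by rewrite /j; lia.
set p := Pos pis j.
set q := Pos pis j.+1.
set S := rk w p.+1 + rk w q.
have GLOB : forall i, i <= size a' ->
  n * Pos pis i + (if j < i then S - n else 0) <= 2 * \sum_(1 <= m < (Pos pis i).+1) rk w m.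
  elim => [|i IH] Hi.
    by rewrite /Pos take0 /= muln0.
  have [H1 H2 H3 H4] := SEG i Hi.
  have IH' := IH (ltnW Hi).
  rewrite (big_cat_nat _ (n := (Pos pis i).+1)) //=; last by lia.
  rewrite mulnDr (seg_sum Hpc H1 H2 H4).
  have Li := LOW i Hi.
  set Si := rk w (Pos pis i).+1 + rk w (Pos pis i.+1) in Li *.
  have E : (Pos pis i.+1 - Pos pis i) * Si >= n * (Pos pis i.+1 - Pos pis i) + (Si - n).
    have -> : Si = n + (Si - n) by lia.
    set e := Si - n; set L := Pos pis i.+1 - Pos pis i.
    have : 1 <= L by rewrite /L; lia.
    nia.
  case: (ltngtP j i) => Hji.
  - have Hji' : j < i.+1 by lia.
    rewrite Hji Hji' in IH' *; nia.
  - have Hji' : j < i.+1 = false by apply/negbTE; rewrite -leqNgt.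
    have Hji'' : j < i = false by apply/negbTE; rewrite -leqNgt ltnW.
    rewrite Hji' Hji'' in IH' *; nia.
  - subst i. rewrite ltnSn ltnn in IH' *.
    rewrite /S -/p -/q in E Li *.
    have ESi : Si = rk w p.+1 + rk w q by [].
    rewrite -/p in IH'.
    have Enq : n * q = n * p + n * (q - p) by rewrite -mulnDr subnKC // ltnW.
    rewrite Enq -ESi; lia.
have Hlast := Pos_last Hsz Hw.
have G := GLOB (size a') (leqnn _); rewrite Hlast Hj (prednK n0) in G.
have RS := rk_sum Hprim; rewrite -/n (big_ltn n0) in RS.
have [H1 H2 H3 H4] := SEG j Hj.
have LOWj := LOW j Hj.
have [L1 L2] := seg_low Hpc H1 H2 H3.
set K := count _ w in L1 L2.
have Hu : uniq (a1 :: a') := lt_sorted_uniq Hsort.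
have TK : \sum_(x <- take s (a1 :: a')) occ w x = K.
  rewrite sum_count_uniq ?take_uniq //; apply: eq_in_count => y Hy /=.
  have Ya : y \in a1 :: a' by rewrite -Hmem.
  rewrite (in_take _ Ya) (nth_Pos Hsz Hw a1); last exact: ltnW.
  rewrite -[y in (y <= _)%O](nth_index a1 Ya).
  have Hi : index y (a1 :: a') < size (a1 :: a') by rewrite index_mem.
  rewrite (@lt_sorted_leq_nth _ _ a1 _ Hsort) ?inE //=; last by lia.
  by rewrite /j -{1}(prednK Hs1) ltnS.
have TA : \sum_(x <- a1 :: a') occ w x = n.
  rewrite sum_count_uniq // /n -count_predT; apply: eq_in_count => y Hy /=.
  by rewrite -Hmem Hy.
have TD : \sum_(x <- drop s (a1 :: a')) occ w x = n - K.
  by rewrite -(cat_take_drop s (a1 :: a')) big_cat /= TK in TA; lia.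
clearbody K.
have Sle : S <= n.
  move: G RS; set A := \sum_(1 <= m < n) rk w m; set B := n * n.-1.
  clearbody A B; rewrite /S; move: (rk w p.+1 + rk w q) => S0 G RS; lia.
have EQ1 : rk w p.+1 + K = n.
  move: Sle L1 L2 LOWj; rewrite /S; move: (rk w p.+1) (rk w q) => x y; lia.
have EQ2 : rk w q = K.
  move: Sle L1 L2 LOWj; rewrite /S; move: (rk w p.+1) (rk w q) => x y; lia.
clear G RS LOWj L1 L2 TA.
rewrite TK TD.
have Hq : q = p + size (nth [::] pis j) + 1 by rewrite /q (Pos_step Hsz Hj).
split.
- move=> Hpi; rewrite Hpi /= addn0 addn1 in Hq.
  move: EQ1 EQ2; rewrite Hq; move: (rk w p.+1) => x; lia.
- move=> HK.
  have E : rk w p.+1 = rk w q.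
    move: EQ1 EQ2 HK; move: (rk w p.+1) (rk w q) => x y; lia.
  have := rk_inj Hprim (m1 := p.+1) (m2 := q) ltac:(lia) H2 E.
  rewrite Hq => /eqP; rewrite -addn1 eqn_add2r -{1}(addn0 p) eqn_add2l eq_sym => /eqP.
  exact: size0nil.
Qed.
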